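(* Under the setting below, suppose additionally that $\underline y\le Y(a_{1:t})\le\overline y$ almost surely. If $\mathbb{P}(A_{1:t}=a_{1:t}\mid X_{0:N}(A_{1:N})\in B_{0:N})>\mathbb{P}(A_{1:t}=a_{1:t})$, then $$\mathbb{E}[\overline Y]-\mathbb{E}[\underline Y]>\mathbb{E}[\overline Y\mid X_{0:N}(A_{1:N})\in B_{0:N}]-\mathbb{E}[\underline Y\mid X_{0:N}(A_{1:N})\in B_{0:N}].$$
   Context: Horizon $T\ge1$, $\mathcal{X}_t=\mathbb{R}^{d_t}$, finite action spaces $\mathcal{A}_t$; potential outcomes $X_0$, $X_t(a_{1:t})\in\mathcal{X}_t$, random actions $A_{1:T}$, and real-valued potential outcomes $Y(a_{1:t})$ defined jointly; $X_{0:t}(a_{1:t})=(X_0,X_1(a_1),\dots,X_t(a_{1:t}))$. Fixed $t\in\{1,\dots,T\}$, $a_{1:t}\in\mathcal{A}_{1:t}$, measurable $B_{0:t}=B_0\times\cdots\times B_t$ with $\mathbb{P}(X_{0:t}(a_{1:t})\in B_{0:t})>0$, and $\underline y,\overline y\in\mathbb{R}$. $N=\max\{0\le s\le t:A_{1:s}=a_{1:s}\}$; $\underline Y=\mathbb{1}(A_{1:t}=a_{1:t})Y(A_{1:t})+\mathbb{1}(A_{1:t}\ne a_{1:t})\underline y$ and $\overline Y$ likewise with $\overline y$. Quantities evaluated at random actions denote the potential outcome indexed by the realized actions. *)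

(* Defs.v *)
From HB Require Import structures.
From mathcomp Require Import all_boot all_order all_algebra.
From mathcomp Require Import all_classical all_reals all_analysis.
Set Implicit Arguments. Unset Strict Implicit. Unset Printing Implicit Defensive.
Import Order.TTheory GRing.Theory Num.Theory.
Local Open Scope classical_set_scope.
Local Open Scope ring_scope.

(* Action histories a_{1:s} = (a_1,...,a_s), with a_j in Act j. *)
Definition hist (Act : nat -> finType) (s : nat) := forall i : 'I_s, Act i.+1.

Section defs.
Context (Omega : Type) (Act : nat -> finType).
Variable A : forall i : nat, Omega -> Act i.

Definition Ahist (s : nat) (w : Omega) : hist Act s := fun i => A i.+1 w.
Arguments Ahist s w i : clear implicits.

Definition prefix_match (t : nat) (a : hist Act t) (s : nat) (w : Omega) : bool :=
  [forall i : 'I_t, (i < s)%N ==> (A i.+1 w == a i)].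

Definition full_match (t : nat) (a : hist Act t) (w : Omega) : bool :=
  [forall i : 'I_t, A i.+1 w == a i].

Definition Nidx (t : nat) (a : hist Act t) (w : Omega) : nat :=
  (\max_(s < t.+1 | prefix_match a s w) (s : nat))%N.

Definition eventXB (d : nat -> nat) (R : Type)
  (X : forall s : nat, hist Act s -> Omega -> (d s).-tuple R)
  (B : forall s : nat, set ((d s).-tuple R)) (t : nat) (a : hist Act t) : set Omega :=
  [set w | forall s : 'I_t.+1, (s <= Nidx a w)%N -> B s (X s (Ahist s w) w)].

(* underline Y / overline Y with fallback value y0 *)
Definition Ybound (R : Type) (Y : forall s : nat, hist Act s -> Omega -> R)
  (t : nat) (a : hist Act t) (y0 : R) (w : Omega) : R :=
  if full_match a w then Y t (Ahist t w) w else y0.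
End defs.
Arguments Ahist {Omega Act} A s w i.
Arguments prefix_match {Omega Act} A {t} a s w.
Arguments full_match {Omega Act} A {t} a w.
Arguments Nidx {Omega Act} A {t} a w.
Arguments eventXB {Omega Act} A {d R} X B {t} a.
Arguments Ybound {Omega Act} A {R} Y {t} a y0 w.

Section prob.
Context (d : measure_display) (Omega : measurableType d) (R : realType).
Variable P : probability Omega R.

Definition expect (f : Omega -> R) : R := fine (\int[P]_x (f x)%:E).

Definition cond_expect (f : Omega -> R) (E : set Omega) : R :=
  fine (\int[P]_(x in E) (f x)%:E) / fine (P E).

Definition prob (F : set Omega) : R := fine (P F).

Definition cond_prob (F E : set Omega) : R := fine (P (F `&` E)) / fine (P E).
End prob.

(* Main.v *)
Require Import Defs.
From HB Require Import structures.
From mathcomp Require Import all_boot all_order all_algebra.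
From mathcomp Require Import all_classical all_reals all_analysis.
From mathcomp Require Import measurable_realfun.
From mathcomp Require Import ring lra.
Import Order.TTheory GRing.Theory Num.Theory.
Local Open Scope classical_set_scope.
Local Open Scope ring_scope.

Section helpers.
Context (dO : measure_display) (Omega : measurableType dO) (Act : nat -> finType)
  (A : forall i : nat, Omega -> Act i)
  (hA : forall (i : nat) (v : Act i), measurable (A i @^-1` [set v])).

Lemma meas_forall (I : finType) (Q : I -> set Omega) :
  (forall i, measurable (Q i)) -> measurable [set w | forall i, Q i w].
Proof.
move=> mQ; rewrite (_ : [set w | _] = \bigcap_(i in setT) Q i).
  by apply: fin_bigcap_measurable => //; exact: finite_finset.
by apply/seteqP; split=> w /= H i; [move=> _|]; apply: H.
Qed.

Lemma meas_full t (a : hist Act t) : measurable [set w | full_match A a w].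
Proof.
rewrite (_ : [set w | _] = [set w : Omega | forall i : 'I_t, (A i.+1 @^-1` [set a i]) w]).
  by apply: meas_forall => i; exact: hA.
apply/seteqP; split=> w /=; first by move/forallP => H i; apply/eqP/H.
by move=> H; apply/forallP => i; apply/eqP/H.
Qed.

Lemma meas_prefix t (a : hist Act t) s : measurable [set w | prefix_match A a s w].
Proof.
rewrite (_ : [set w | _] = [set w : Omega | forall i : 'I_t,
   (if (i < s)%N then A i.+1 @^-1` [set a i] else setT) w]).
  by apply: meas_forall => i; case: ifP => _ //; exact: hA.
apply/seteqP; split=> w /=; first by move/forallP => H i; have := H i; case: ifP => //= _ /eqP.
move=> H; apply/forallP => i; have := H i; case: ifP => //= _ ->; exact/eqP.
Qed.

Lemma full_hist t (a : hist Act t) w : full_match A a w -> Ahist A t w = a.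
Proof.
move/forallP => H; apply: functional_extensionality_dep => i; exact/eqP/H.
Qed.

Definition restr {t} (a : hist Act t) (s : 'I_t.+1) : hist Act s :=
  fun i : 'I_s => a (widen_ord (ltnSE (ltn_ord s)) i).

Lemma prefix_hist t (a : hist Act t) (s : 'I_t.+1) w :
  prefix_match A a s w -> Ahist A s w = restr a s.
Proof.
move/forallP => H; apply: functional_extensionality_dep => i.
have := H (widen_ord (ltnSE (ltn_ord s)) i); rewrite /= ltn_ord /= => /eqP.
by [].
Qed.

Lemma Nidx_prefix t (a : hist Act t) (s : 'I_t.+1) w :
  (s <= Nidx A a w)%N = prefix_match A a s w.
Proof.
apply/idP/idP; last first.
  by move=> Hs; rewrite /Nidx; exact: (leq_bigmax_cond _ Hs).
have hc : (0 < #|[pred s : 'I_t.+1 | prefix_match A a s w]|)%N.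
  apply/card_gt0P; exists ord0; rewrite inE /=.
  by apply/forallP.
case: (eq_bigmax_cond (fun s : 'I_t.+1 => (s : nat)) hc) => i0 Hi0 E.
rewrite /Nidx.
have -> : (\max_(s0 < t.+1 | prefix_match A a s0 w) (s0 : nat))%N = i0 by rewrite -E.
rewrite inE /= in Hi0.
move=> le; move/forallP: Hi0 => H; apply/forallP => i; apply/implyP => lt.
by have := H i; rewrite (leq_trans lt le).
Qed.
End helpers.
Arguments restr {Act t}.
Arguments meas_forall {dO Omega I} Q.
Arguments meas_full {dO Omega Act A} hA {t} a.
Arguments meas_prefix {dO Omega Act A} hA {t} a s.
Arguments full_hist {dO Omega Act A t a w}.
Arguments prefix_hist {dO Omega Act A t a s w}.
Arguments Nidx_prefix {dO Omega Act A t a s w}.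

Theorem proposition4p5
  (R : realType) (dO : measure_display) (Omega : measurableType dO)
  (P : probability Omega R)
  (T : nat) (dim : nat -> nat) (Act : nat -> finType)
  (X : forall s : nat, hist Act s -> Omega -> (dim s).-tuple R)
  (A : forall i : nat, Omega -> Act i)
  (Y : forall s : nat, hist Act s -> Omega -> R)
  (hX : forall (s : nat) (h : hist Act s), measurable_fun setT (X s h))
  (hA : forall (i : nat) (v : Act i), measurable (A i @^-1` [set v]))
  (hY : forall (s : nat) (h : hist Act s), measurable_fun setT (Y s h))
  (t : nat) (ht1 : (1 <= t)%N) (htT : (t <= T)%N)
  (a : hist Act t)
  (B : forall s : nat, set ((dim s).-tuple R))
  (hB : forall s : nat, measurable (B s))
  (hpos : (0 < P [set w | forall s : 'I_t.+1,
                            B s (X s (fun i : 'I_s => a (widen_ord (ltnSE (ltn_ord s)) i)) w)])%E)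
  (ylo yhi : R) (hlohi : ylo < yhi)
  (hbd : {ae P, forall w, ylo <= Y t a w <= yhi}) :
  cond_prob P [set w | full_match A a w] (eventXB A X B a)
    > prob P [set w | full_match A a w] ->
  expect P (Ybound A Y a yhi) - expect P (Ybound A Y a ylo)
    > cond_expect P (Ybound A Y a yhi) (eventXB A X B a)
      - cond_expect P (Ybound A Y a ylo) (eventXB A X B a).
Proof.
move=> hcp.
set F := [set w | full_match A a w].
set E := eventXB A X B a.
have mF : measurable F := meas_full hA a.
have mpre : forall s : 'I_t.+1, measurable (X s (restr a s) @^-1` B s).
  by move=> s; have := hX s (restr a s) measurableT _ (hB s); rewrite setTI.
have Eeq : E = [set w | forall s : 'I_t.+1,
    (~` [set w | prefix_match A a s w] `|` (X s (restr a s) @^-1` B s)) w].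
  apply/seteqP; split => w /= H s.
    have [hp|hp] := boolP (prefix_match A a s w); last by left.
    right; have := H s; rewrite Nidx_prefix hp => /(_ isT).
    by rewrite (prefix_hist hp).
  rewrite Nidx_prefix => hp; case: (H s) => //= hq.
  by rewrite (prefix_hist hp).
have mE : measurable E.
  rewrite Eeq; apply: meas_forall => s; apply: measurableU => //.
  exact/measurableC/(meas_prefix hA).
have PEpos : (0 < P E)%E.
  apply: (lt_le_trans hpos); apply: le_measure; rewrite ?inE //.
    by apply: meas_forall => s; exact: (mpre s).
  by rewrite Eeq => w /= H s; right; exact: H.
set c := yhi - ylo.
have c0 : 0 < c by rewrite subr_gt0.
pose Yc := ((cst ylo) \max ((cst yhi) \min (Y t a))).
pose gh (y0 : R) w := if full_match A a w then Yc w else y0.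
have mfm : measurable_fun setT (fun w => full_match A a w).
  apply: (@measurable_fun_bool _ _ _ _ true); rewrite setTI.
  exact: mF.
have mYc : measurable_fun setT Yc.
  apply: measurable_maxr; first exact: measurable_cst.
  apply: measurable_minr; first exact: measurable_cst.
  exact: hY.
have key : forall y0, ylo <= y0 <= yhi -> forall D, measurable D ->
    (\int[P]_(x in D) (Ybound A Y a y0 x)%:E = \int[P]_(x in D) (gh y0 x)%:E)%E
    /\ P.-integrable D (EFin \o gh y0).
  move=> y0 /andP[y0l y0h] D mD.
  have eqY : Ybound A Y a y0 = fun w => if full_match A a w then Y t a w else y0.
    apply: funext => w; rewrite /Ybound; case: ifP => // hf.
    by rewrite (full_hist hf).
  have mgh : measurable_fun setT (gh y0).
    by apply: measurable_fun_ifT => //; exact: measurable_cst.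
  split.
    apply: ae_eq_integral => //.
    - apply/measurable_EFinP; apply: (measurable_funS measurableT) => //.
      rewrite eqY; apply: measurable_fun_ifT => //; exact: measurable_cst.
    - apply/measurable_EFinP; exact: (measurable_funS measurableT (subsetT _) mgh).
    - apply: filterS hbd => w /andP[l h] _; rewrite eqY /gh /Yc.
      case: ifP => // _; congr EFin.
      by apply/eqP; rewrite eq_le le_max ge_max le_min ge_min l h lexx /= ?orbT ?andbT.
  have bd : forall w, ylo <= gh y0 w <= yhi.
    move=> w; rewrite /gh; case: ifP => _; last by rewrite y0l y0h.
    rewrite /Yc /= le_max ge_max ge_min lexx (ltW hlohi) /=.
    by rewrite lexx.
  apply: (@le_integrable _ _ _ P D mD _ (EFin \o cst (`|ylo| + `|yhi|))).
  - apply/measurable_EFinP; exact: (measurable_funS measurableT (subsetT _) mgh).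
  - move=> w _ /=; rewrite lee_fin.
    have /andP[l h] := bd w.
    have := ler_norm yhi; have n1 : `|ylo| <= `|ylo| by [].
    rewrite ler_norml in n1; case/andP: n1 => n1 _; move: n1.
    have := normr_ge0 ylo; have := normr_ge0 yhi.
    rewrite (ger0_norm (addr_ge0 (normr_ge0 _) (normr_ge0 _))).
    rewrite ler_norml; move=> *; apply/andP; split; lra.
  - exact: finite_measure_integrable_cst.
have hhi : ylo <= yhi <= yhi by rewrite lexx (ltW hlohi).
have hlo : ylo <= ylo <= yhi by rewrite lexx (ltW hlohi).
have finP : forall S, measurable S -> P S \is a fin_num.
  by move=> S mS; exact: fin_num_measure.
have diff : forall D, measurable D ->
    fine (\int[P]_(x in D) (Ybound A Y a yhi x)%:E)%E
    - fine (\int[P]_(x in D) (Ybound A Y a ylo x)%:E)%E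
    = c * fine (P (~` F `&` D)).
  move=> D mD.
  have [eh ih] := key yhi hhi D mD.
  have [el il] := key ylo hlo D mD.
  rewrite eh el -fineB; [|exact: integrable_fin_num|exact: integrable_fin_num].
  rewrite -integralB_EFin //.
  rewrite (eq_integral (fun x => c%:E * (\1_(~` F) x)%:E)%E); last first.
    move=> w _; rewrite /gh indicE -EFinB -EFinM; congr EFin.
    case: ifP => hf.
      by rewrite memNset; [rewrite subrr mulr0 | move/(_ hf)].
    by rewrite mem_set ?mulr1 // /F /= hf.
  rewrite ge0_integralZl_EFin //; last 2 first.
  - apply/measurable_EFinP; apply: (measurable_funS measurableT) => //.
    exact/measurable_indic/measurableC.
  - exact: ltW.
  rewrite integral_indic //; last exact: measurableC.
  rewrite fineM //; exact/finP/measurableI/mD/measurableC.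
rewrite /cond_expect /expect -mulrBl (diff E mE) (diff setT measurableT).
rewrite setIT probability_setC // fineB // ?finP //.
rewrite setIC -setDE measureD //; last first.
  exact: (le_lt_trans (probability_le1 P mE) (ltry 1)).
rewrite fineB //; last exact/finP/measurableI.
move: hcp; rewrite /cond_prob /prob -/F -/E setIC.
set pE := fine (P E); set pEF := fine (P (E `&` F)); set pF := fine (P F).
have pEpos : 0 < pE.
  rewrite /pE fine_gt0 // PEpos /=.
  exact: (le_lt_trans (probability_le1 P mE) (ltry 1)).
move=> hcp.
have -> : c * (pE - pEF) / pE = c * (1 - pEF / pE).
  by field; rewrite gt_eqF.
rewrite fine1 ltr_pM2l // ltrD2l ltrN2 //.
exact: finP.
Qed.
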